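(* Let $R$ be a commutative Noetherian ring of prime characteristic $p$ and suppose $c$ is a $p^{w_0}$-weak test element for $R$ for some $w_0\in\mathbb{N}_0$. For each ideal $\mathfrak{a}$ of $R$ let $H(\mathfrak{a})=\bigoplus_{n\ge0}R/\mathfrak{a}^{[p^n]}$ be the graded left $R[x,f]$-module in which $x(r+\mathfrak{a}^{[p^n]})=r^p+\mathfrak{a}^{[p^{n+1}]}$ (from degree $n$ to degree $n+1$), and let $H:=\bigoplus_{\mathfrak{a}}H(\mathfrak{a})$ (direct sum over all ideals $\mathfrak{a}$ of $R$). Let $T:=\bigoplus_{\mathfrak{a}}\bigoplus_{n\ge0}(\mathfrak{a}^{[p^n]})^*/\mathfrak{a}^{[p^n]}$. Then: (i) $T=\operatorname{ann}_H(\bigoplus_{n\ge w_0}Rcx^n)$, so $T$ is a special annihilator submodule of $H$; (ii) writing $\operatorname{grann}_{R[x,f]}T=\bigoplus_{n\ge0}\mathfrak{c}_nx^n$ with $(\mathfrak{c}_n)$ ascending, the eventual constant value $\lim_{n\to\infty}\mathfrak{c}_n$ equals the weak test ideal $\tau'(R)$; (iii) $T$ contains every special annihilator submodule $T'$ of $H$ whose graded annihilator $\bigoplus_n\mathfrak{b}_nx^n$ satisfies $\operatorname{height}(\lim_{n\to\infty}\mathfrak{b}_n)\ge1$ (with $\operatorname{height}R=\infty$).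
   Context: $R[x,f]$ is the Frobenius skew polynomial ring: free left $R$-module on $(x^i)_{i\ge0}$, $xr=r^px$. Graded two-sided ideals are $\bigoplus_n\mathfrak{b}_nx^n$ with $(\mathfrak{b}_n)$ ascending chains of ideals (eventually constant). For a graded two-sided ideal $\mathfrak{B}$, $\operatorname{ann}_H\mathfrak{B}=\{h:\theta h=0\ \forall\theta\in\mathfrak{B}\}$; special annihilator submodules are those of this form. $\operatorname{grann}N$ is the set of $\sum r_ix^i$ with each $r_ix^i$ annihilating $N$. $\mathfrak{a}^{[p^n]}$ is generated by $p^n$-th powers; $R^\circ$ is the complement of the union of minimal primes; $r\in\mathfrak{a}^*$ iff some $c\in R^\circ$ has $cr^{p^n}\in\mathfrak{a}^{[p^n]}$ for all $n\gg0$. A $p^{w_0}$-weak test element is $c\in R^\circ$ such that for every ideal $\mathfrak{b}$ and $r\in R$: $r\in\mathfrak{b}^*$ iff $cr^{p^n}\in\mathfrak{b}^{[p^n]}$ for all $n\ge w_0$. The weak test ideal $\tau'(R)$ is the ideal generated by $0$ and all $p^w$-weak test elements for all $w\in\mathbb{N}_0$. *)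

(* Defs.v *)
From mathcomp Require Import all_boot all_algebra.
Set Implicit Arguments. Unset Strict Implicit. Unset Printing Implicit Defensive.
Import GRing.Theory.
Local Open Scope ring_scope.

Section Defs.
Variable R : comNzRingType.

Definition is_ideal (I : R -> Prop) : Prop :=
  [/\ I 0, (forall x y, I x -> I y -> I (x + y)) & (forall r x, I x -> I (r * x))].

Record ideal := Ideal { ideal_pred :> R -> Prop; ideal_ax : is_ideal ideal_pred }.

Definition subI (I J : R -> Prop) : Prop := forall x, I x -> J x.
Definition eqI (I J : R -> Prop) : Prop := forall x, I x <-> J x.

Definition gen_ideal (S : R -> Prop) : R -> Prop :=
  fun r => forall J : ideal, subI S J -> J r.

Definition noetherian : Prop :=
  forall I : nat -> ideal, (forall n, subI (I n) (I n.+1)) ->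
    exists N, forall n, (N <= n)%N -> eqI (I n) (I N).

Definition prime_ideal (P : R -> Prop) : Prop :=
  [/\ is_ideal P, ~ P 1 & forall a b, P (a * b) -> P a \/ P b].

Definition minimal_prime (P : R -> Prop) : Prop :=
  prime_ideal P /\ forall Q, prime_ideal Q -> subI Q P -> subI P Q.

Definition Rcirc (c : R) : Prop := forall P, minimal_prime P -> ~ P c.

(* height(I) >= n : every prime P containing I is the top of a strictly
   descending chain of primes P = Q_0 > Q_1 > ... > Q_n.
   (height of the unit ideal is infinity: vacuous.) *)
Definition height_ge (n : nat) (I : R -> Prop) : Prop :=
  forall P, prime_ideal P -> subI I P ->
    exists Q : nat -> R -> Prop,
      [/\ eqI (Q 0%N) P,
          (forall i, (i <= n)%N -> prime_ideal (Q i)) &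
          (forall i, (i < n)%N -> subI (Q i.+1) (Q i) /\
                                   exists x, Q i x /\ ~ Q i.+1 x)].

Variable p : nat.

Definition frob (a : R -> Prop) (n : nat) : R -> Prop :=
  gen_ideal (fun y => exists2 s, a s & y = s ^+ (p ^ n)).

Definition tight (a : R -> Prop) (r : R) : Prop :=
  exists2 c, Rcirc c &
    exists N, forall n, (N <= n)%N -> frob a n (c * r ^+ (p ^ n)).

Definition weak_test (w0 : nat) (c : R) : Prop :=
  Rcirc c /\
  forall (b : ideal) (r : R),
    tight b r <-> (forall n, (w0 <= n)%N -> frob b n (c * r ^+ (p ^ n))).

Definition weak_test_ideal : R -> Prop :=
  gen_ideal (fun y => y = 0 \/ exists w, weak_test w y).

(* An element is given by representatives h a n of its (a,n)-component;
   it must have finite support. *)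
Definition Hrep := ideal -> nat -> R.

Fixpoint inL {A : Type} (x : A) (l : list A) : Prop :=
  match l with nil => False | cons y l' => y = x \/ inL x l' end.

Definition inH (h : Hrep) : Prop :=
  exists l : list (ideal * nat),
    forall (a : ideal) n, ~ inL (a, n) l -> frob a n (h a n).

Definition zeroH (h : Hrep) : Prop := forall (a : ideal) n, frob a n (h a n).

(* elements of R[x,f] are coefficient lists theta = sum_i theta`_i x^i;
   action: x^i (r + a^[p^n]) = r^(p^i) + a^[p^(n+i)] *)
Definition act (theta : seq R) (h : Hrep) : Hrep :=
  fun a m => \sum_(i < size theta)
               (if (i <= m)%N then theta`_i * h a (m - i)%N ^+ (p ^ i) else 0).

Definition homog (r : R) (n : nat) : seq R := rcons (nseq n 0) r.

(* graded two-sided ideal (+)_n b_n x^n, given by ascending chain b *)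
Definition ascending (b : nat -> ideal) : Prop := forall n, subI (b n) (b n.+1).

Definition inB (b : nat -> R -> Prop) (theta : seq R) : Prop :=
  forall i, b i theta`_i.

Definition annH (b : nat -> R -> Prop) (h : Hrep) : Prop :=
  forall theta, inB b theta -> zeroH (act theta h).

Definition eqH (N M : Hrep -> Prop) : Prop := forall h, inH h -> (N h <-> M h).
Definition subH (N M : Hrep -> Prop) : Prop := forall h, inH h -> N h -> M h.

Definition special (N : Hrep -> Prop) : Prop :=
  exists b : nat -> ideal, ascending b /\ eqH N (annH (fun n r => b n r)).

Definition grann (N : Hrep -> Prop) (n : nat) : R -> Prop :=
  fun r => forall h, inH h -> N h -> zeroH (act (homog r n) h).

Definition Tsub : Hrep -> Prop := fun h => forall (a : ideal) n, tight (frob a n) (h a n).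

End Defs.

(* Main.v *)
Require Import Defs.
From mathcomp Require Import all_boot all_algebra.
From mathcomp Require Import ring.
From Stdlib Require Import Classical ClassicalEpsilon.
Set Implicit Arguments. Unset Strict Implicit. Unset Printing Implicit Defensive.
Import GRing.Theory.
Local Open Scope ring_scope.

Section Basic.
Variable R : comNzRingType.
Implicit Types (I J : R -> Prop) (x y r : R).

Lemma id0 (I : ideal R) : I 0. Proof. by case: I => ? /= -[]; rewrite /is_ideal; auto. Qed.
Lemma idD (I : ideal R) x y : I x -> I y -> I (x + y). Proof. by case: I => ? /= -[]; rewrite /is_ideal; auto. Qed.
Lemma idMl (I : ideal R) r x : I x -> I (r * x). Proof. by case: I => ? /= -[]; rewrite /is_ideal; auto. Qed.
Lemma idMr (I : ideal R) r x : I x -> I (x * r). Proof. by rewrite mulrC; apply: idMl. Qed.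
Lemma idN (I : ideal R) x : I x -> I (- x).
Proof. by move=> Ix; rewrite -mulN1r; apply: idMl. Qed.
Lemma idB (I : ideal R) x y : I x -> I y -> I (x - y).
Proof. by move=> Ix Iy; apply: idD => //; apply: idN. Qed.
Lemma idsum (I : ideal R) n (F : 'I_n -> R) : (forall i, I (F i)) -> I (\sum_(i < n) F i).
Proof. move=> H; apply: (big_ind I) => //; [exact: id0| exact: idD]. Qed.

Lemma gen_is_ideal (S : R -> Prop) : is_ideal (gen_ideal S).
Proof.
split.
- by move=> J _; apply: id0.
- by move=> x y Hx Hy J SJ; apply: idD; [apply: Hx | apply: Hy].
- by move=> r x Hx J SJ; apply: idMl; apply: Hx.
Qed.
Definition genI (S : R -> Prop) : ideal R := Ideal (gen_is_ideal S).
Lemma gen_sub (S : R -> Prop) : subI S (gen_ideal S).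
Proof. by move=> x Sx J SJ; apply: SJ. Qed.

Lemma prime_prod (P : R -> Prop) n (F : 'I_n -> R) (Q : pred 'I_n) :
  prime_ideal P -> (forall i, Q i -> ~ P (F i)) -> ~ P (\prod_(i < n | Q i) F i).
Proof.
move=> [_ P1 Pm] H; apply: (big_ind (fun x => ~ P x)) => //.
by move=> x y Hx Hy /Pm [].
Qed.

Lemma prime_ideal_ideal (P : R -> Prop) (pP : prime_ideal P) : ideal R.
Proof. exact: (Ideal (let: And3 a _ _ := pP in a)). Defined.

End Basic.

Section Frob.
Variable R : comNzRingType.
Variable p : nat.
Hypothesis hp : p \in [pchar R].
Implicit Types (x y r : R).

Lemma p_gt0 : (0 < p)%N. Proof. exact: prime_gt0 (pcharf_prime hp). Qed.
Lemma pn_gt0 n : (0 < p ^ n)%N. Proof. by rewrite expn_gt0 p_gt0. Qed.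

Lemma frobD x y n : (x + y) ^+ (p ^ n) = x ^+ (p ^ n) + y ^+ (p ^ n).
Proof.
elim: n => [|n IH]; first by rewrite expn0 !expr1.
rewrite expnSr !exprM IH.
have := pFrobenius_autD_comm hp (mulrC (x ^+ (p ^ n)) (y ^+ (p ^ n))).
by rewrite !pFrobenius_autE.
Qed.
Lemma frob0 n : (0 : R) ^+ (p ^ n) = 0.
Proof. by rewrite expr0n eqn0Ngt pn_gt0. Qed.

Lemma frob_is_ideal (a : R -> Prop) n : is_ideal (frob p a n). Proof. exact: gen_is_ideal. Qed.
Definition frobI (a : R -> Prop) n : ideal R := Ideal (frob_is_ideal a n).

Lemma frob_gen (a : R -> Prop) n s : a s -> frob p a n (s ^+ (p ^ n)).
Proof. by move=> As; apply: gen_sub; exists s. Qed.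

Lemma frob_frob (a : R -> Prop) n m : eqI (frob p (frob p a n) m) (frob p a (n + m)).
Proof.
move=> z; split.
- pose X := fun x : R => frob p a (n + m) (x ^+ (p ^ m)).
  have iX : is_ideal X.
    split; rewrite /X.
    + by rewrite frob0; apply: (id0 (frobI a (n + m))).
    + by move=> x y Hx Hy; rewrite frobD; apply: (idD (I := frobI a (n+m))).
    + by move=> r x Hx; rewrite exprMn; apply: (idMl (I := frobI a (n+m))).
  have sX : subI (frob p a n) X.
    move=> x Hx; apply: (Hx (Ideal iX)) => y [s As ->].
    by rewrite /= /X -exprM -expnD; apply: frob_gen.
  move=> Hz; apply: (Hz (frobI a (n + m))) => y [x Hx ->].
  exact: sX.
- move=> Hz; apply: (Hz (frobI (frob p a n) m)) => y [s As ->].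
  rewrite /= expnD exprM; apply: frob_gen; exact: frob_gen.
Qed.

Lemma frob_0 (a : ideal R) : eqI (frob p a 0) a.
Proof.
move=> z; split.
- move=> Hz; apply: (Hz a) => y [s As ->]; by rewrite expn0 expr1.
- by move=> Az; have := frob_gen (n:=0) Az; rewrite expn0 expr1.
Qed.

Lemma frob_eqI (a b : R -> Prop) n : eqI a b -> eqI (frob p a n) (frob p b n).
Proof.
move=> Eab z; split => Hz J HJ; apply: Hz => y [s As ->]; apply: HJ; exists s => //;
  by apply/Eab.
Qed.

Lemma tight_eqI (a b : R -> Prop) z : eqI a b -> tight p a z -> tight p b z.
Proof.
move=> E [c Hc [N HN]]; exists c => //; exists N => n Hn.
by apply/(frob_eqI n E); apply: HN.
Qed.

Lemma Rcirc1 : Rcirc (1 : R).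
Proof. by move=> P [[_ P1 _] _]. Qed.

Lemma tight0 (a : R -> Prop) : tight p a 0.
Proof.
exists 1; first exact: Rcirc1.
exists 0%N => n _; rewrite frob0 mulr0; exact: (id0 (frobI a n)).
Qed.

Lemma nth_homog r k i : (homog r k)`_i = if i == k then r else 0.
Proof.
rewrite /homog nth_rcons size_nseq nth_nseq.
by case: ltngtP => //.
Qed.

Lemma act_homog r k (h : Hrep R) a m :
  act p (homog r k) h a m = if (k <= m)%N then r * h a (m - k)%N ^+ (p ^ k) else 0.
Proof.
rewrite /act size_rcons size_nseq big_ord_recr /= big1 ?add0r.
  by rewrite nth_homog eqxx.
by move=> i _; rewrite nth_homog (ltn_eqF (ltn_ord i)) mul0r; case: ifP.
Qed.

End Frob.

Section Noeth.
Variable R : comNzRingType.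

Definition good (I : R -> Prop) := exists k (Q : nat -> R -> Prop),
  (forall i, (i < k)%N -> prime_ideal (Q i) /\ subI I (Q i)) /\
  forall P, prime_ideal P -> subI I P -> exists2 i, (i < k)%N & subI (Q i) P.

Lemma addI_ax (I : ideal R) (a : R) :
  is_ideal (fun z => exists y t, I y /\ z = y + t * a).
Proof.
split.
- by exists 0, 0; split; [apply: id0 | rewrite mul0r addr0].
- move=> x1 x2 [y1 [t1 [Iy1 ->]]] [y2 [t2 [Iy2 ->]]].
  exists (y1 + y2), (t1 + t2); split; first exact: idD.
  ring.
- move=> r x [y [t [Iy ->]]]; exists (r * y), (r * t); split; first exact: idMl.
  ring.
Qed.
Definition addI (I : ideal R) a : ideal R := Ideal (addI_ax I a).

Lemma addI_sub (I : ideal R) a : subI I (addI I a).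
Proof. by move=> x Ix; exists x, 0; split => //; rewrite mul0r addr0. Qed.
Lemma addI_a (I : ideal R) a : addI I a a.
Proof. by exists 0, 1; split; [apply: id0 | rewrite mul1r add0r]. Qed.
Lemma addI_le (I : ideal R) a (P : R -> Prop) : prime_ideal P -> subI I P -> P a ->
  subI (addI I a) P.
Proof.
move=> pP sIP Pa x [y [t [Iy ->]]].
have := idD (I := prime_ideal_ideal pP); apply => /=; first exact: sIP.
exact: (idMl (I := prime_ideal_ideal pP)).
Qed.

Lemma step (I : ideal R) : ~ good I ->
  exists J : ideal R, ~ good J /\ subI I J /\ ~ subI J I.
Proof.
move=> bad.
have n1 : ~ I 1.
  move=> I1; apply: bad; exists 0%N, (fun _ => I: R -> Prop); split => // P [_ P1 _] sIP.
  by case: P1; apply: sIP.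
have np : ~ prime_ideal I.
  move=> pI; apply: bad; exists 1%N, (fun _ => I : R -> Prop); split => [i _|P _ sIP].
    by split => // x.
  by exists 0%N.
have [a [b [Iab [na nb]]]] : exists a b, I (a * b) /\ ~ I a /\ ~ I b.
  apply: NNPP => H; apply: np; split => //; first by case: I {bad n1 H}.
  move=> a b Iab; apply: NNPP => H2; apply: H; exists a, b; split => //.
  by split => ?; apply: H2; [left|right].
case: (classic (good (addI I a))) => ga; last first.
  exists (addI I a); split => //; split; first exact: addI_sub.
  by move=> H; apply: na; apply: H; apply: addI_a.
case: (classic (good (addI I b))) => gb; last first.
  exists (addI I b); split => //; split; first exact: addI_sub.
  by move=> H; apply: nb; apply: H; apply: addI_a.
exfalso; apply: bad.
case: ga => [k1 [Q1 [HQ1 HQ1']]]; case: gb => [k2 [Q2 [HQ2 HQ2']]].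
exists (k1 + k2)%N, (fun i => if (i < k1)%N then Q1 i else Q2 (i - k1)%N).
split.
  move=> i ik; case: ifP => ik1.
    have [? s] := HQ1 i ik1; split => // x Ix; apply: s; exact: addI_sub.
  have [|? s] := HQ2 (i - k1)%N.
    by rewrite ltn_subLR // leqNgt ik1.
  split => // x Ix; apply: s; exact: addI_sub.
move=> P pP sIP.
have [Pa|Pb] : P a \/ P b by case: pP => _ _; apply; apply: sIP.
  have [i ik s] := HQ1' P pP (addI_le pP sIP Pa).
  by exists i; [rewrite ltn_addr | rewrite ik].
have [i ik s] := HQ2' P pP (addI_le pP sIP Pb).
exists (k1 + i)%N; first by rewrite ltn_add2l.
by rewrite ltnNge leq_addr /= addKn.
Qed.

Lemma all_good (hN : noetherian R) (I : ideal R) : good I.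
Proof.
apply: NNPP => bad.
have H : forall J : ideal R, exists J' : ideal R,
    ~ good J -> ~ good J' /\ subI J J' /\ ~ subI J' J.
  move=> J; case: (classic (good J)) => gJ; first by exists J.
  by have [J' HJ'] := step gJ; exists J'.
pose f J := proj1_sig (constructive_indefinite_description _ (H J)).
have fP (J : ideal R) : ~ good J -> ~ good (f J) /\ subI J (f J) /\ ~ subI (f J) J.
  exact: (proj2_sig (constructive_indefinite_description _ (H J))).
pose C n := iter n f I.
have Cbad : forall n, ~ good (C n) by elim => [|n IH] //=; exact: (fP _ IH).1.
have [N HN] := hN C (fun n => (fP _ (Cbad n)).2.1).
have E := HN N.+1 (leqnSn N).
by apply: (fP _ (Cbad N)).2.2 => x Hx; apply/E.
Qed.

Lemma zero_ax : is_ideal (fun x : R => x = 0).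
Proof. by split => [//|x y -> ->|r x ->]; rewrite ?addr0 ?mulr0. Qed.

Lemma minprimes (hN : noetherian R) : exists m (P : nat -> R -> Prop),
  [/\ (forall i, (i < m)%N -> minimal_prime (P i)),
      (forall i j, (i < m)%N -> (j < m)%N -> i != j -> ~ subI (P i) (P j)) &
      (forall Q, minimal_prime Q -> exists2 i, (i < m)%N & eqI Q (P i))].
Proof.
have [k [Q [HQ1 HQ2]]] := all_good hN (Ideal zero_ax).
have gen : forall k', exists m (P : nat -> R -> Prop),
  [/\ (forall i, (i < m)%N -> minimal_prime (P i)),
      (forall i j, (i < m)%N -> (j < m)%N -> i != j -> ~ subI (P i) (P j)) &
      (forall i, (i < k')%N -> minimal_prime (Q i) -> exists2 j, (j < m)%N & eqI (Q i) (P j))].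
  elim => [|k' [m [P [P1 P2 P3]]]].
    by exists 0%N, (fun _ => Q 0%N).
  case: (classic (minimal_prime (Q k') /\ forall j, (j < m)%N -> ~ eqI (Q k') (P j)))
    => [[mk nk] | hk].
    exists m.+1, (fun i => if (i < m)%N then P i else Q k'); split.
    - by move=> i _; case: ifP => // im; apply: P1.
    - move=> i j; rewrite !ltnS => im jm ij.
      case: ifP => im'; case: ifP => jm'.
      + exact: P2.
      + move=> s; apply: (nk i im') => x; split; last by apply: s.
        by move=> Qx; apply: mk.2 x Qx => //; case: (P1 i im').
      + move=> s; apply: (nk j jm') => x; split; first by apply: s.
        by move=> Px; apply: (P1 j jm').2 x Px => //; case: mk.
      + have ei : i = m by apply/eqP; rewrite eqn_leq im leqNgt im'.
        have ej : j = m by apply/eqP; rewrite eqn_leq jm leqNgt jm'.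
        by move: ij; rewrite ei ej eqxx.
    - move=> i; rewrite ltnS leq_eqVlt => /orP [/eqP -> _| ik mi].
        by exists m => //; rewrite ltnn.
      have [j jm E] := P3 i ik mi; exists j; first by rewrite ltnS ltnW.
      by rewrite jm.
  exists m, P; split => // i; rewrite ltnS leq_eqVlt => /orP [/eqP -> mi| ik mi].
    apply: NNPP => H; apply: hk; split => // j jm E; apply: H; by exists j.
  exact: P3.
have [m [P [P1 P2 P3]]] := gen k.
exists m, P; split => // Q0 [pQ0 mQ0].
have [i ik sQ] := HQ2 Q0 pQ0 (fun x (x0 : x = 0) =>
   eq_ind_r Q0 (id0 (prime_ideal_ideal pQ0)) x0).
have [pQi _] := HQ1 i ik.
have s0 := mQ0 _ pQi sQ.
have mi : minimal_prime (Q i).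
  split => // Q' pQ' sQ' x Qx; apply: (mQ0 Q' pQ').
    by move=> y Hy; apply: sQ; apply: sQ'.
  exact: sQ.
have [j jm E] := P3 i ik mi; exists j => // x; split => Hx.
  by apply/E; apply: s0.
by apply: sQ; apply/E.
Qed.

End Noeth.

Section Avoid.
Variable R : comNzRingType.
Variable m : nat.
Variable P : nat -> R -> Prop.
Hypothesis P1 : forall i, (i < m)%N -> minimal_prime (P i).
Hypothesis P2 : forall i j, (i < m)%N -> (j < m)%N -> i != j -> ~ subI (P i) (P j).
Hypothesis P3 : forall Q, minimal_prime Q -> exists2 i, (i < m)%N & eqI Q (P i).

Lemma idsumP (I : ideal R) n (F : 'I_n -> R) (Q : pred 'I_n) :
  (forall i, Q i -> I (F i)) -> I (\sum_(i < n | Q i) F i).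
Proof. move=> H; apply: (big_ind I) => //; [exact: id0| exact: idD]. Qed.

Lemma Pprime i : (i < m)%N -> prime_ideal (P i).
Proof. by move=> im; case: (P1 im). Qed.
Definition PI i (im : (i < m)%N) : ideal R := prime_ideal_ideal (Pprime im).

Lemma Rcirc_of x : (forall i, (i < m)%N -> ~ P i x) -> Rcirc x.
Proof. by move=> H Q mQ Qx; have [i im E] := P3 mQ; apply: (H i im); apply/E. Qed.

Lemma Rcirc_not x i : Rcirc x -> (i < m)%N -> ~ P i x.
Proof. by move=> H im; apply: H; apply: P1. Qed.

Lemma sep i : exists e, (i < m)%N -> ~ P i e /\ forall j, (j < m)%N -> j != i -> P j e.
Proof.
case: (ltnP i m) => im; last by exists 0.
have H : forall j, exists w, (j < m)%N /\ j != i -> P j w /\ ~ P i w.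
  move=> j; case: (classic ((j < m)%N /\ j != i)) => [[jm ji]|nj]; last by exists 0.
  have := P2 jm im ji => ns.
  have [w Hw] := not_all_ex_not _ _ ns.
  exists w => _; split.
    by apply: NNPP => H0; apply: Hw => Hj; exfalso; apply: H0.
  by move=> H0; apply: Hw => _.
pose w j := proj1_sig (constructive_indefinite_description _ (H j)).
have wP j : (j < m)%N /\ j != i -> P j (w j) /\ ~ P i (w j).
  exact: (proj2_sig (constructive_indefinite_description _ (H j))).
exists (\prod_(j < m | (j : nat) != i) w j) => _; split.
  apply: prime_prod; first exact: Pprime.
  by move=> j ji; apply: (wP j (conj (ltn_ord j) ji)).2.
move=> j jm ji.
rewrite (bigD1 (Ordinal jm)) //=.
exact: (idMr (I := PI jm)) (wP j (conj jm ji)).1.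
Qed.

Definition ee i := proj1_sig (constructive_indefinite_description _ (sep i)).
Lemma eeP i : (i < m)%N -> ~ P i (ee i) /\ forall j, (j < m)%N -> j != i -> P j (ee i).
Proof. exact: (proj2_sig (constructive_indefinite_description _ (sep i))). Qed.

Definition SS (f : nat -> R) := \sum_(j < m) f j * ee j.

Lemma SSP f i : (i < m)%N -> P i (SS f - f i * ee i).
Proof.
move=> im; rewrite /SS (bigD1 (Ordinal im)) //= addrAC subrr add0r.
apply: (idsumP (I := PI im)) => j ne /=.
apply: (idMl (I := PI im)); apply: ((eeP (ltn_ord j)).2 i im).
by rewrite eq_sym; apply: contra ne => /eqP E; apply/eqP; apply: val_inj.
Qed.

Lemma avoidA (r c : R) : Rcirc c -> exists u, Rcirc (r + u * c).
Proof.
move=> Hc.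
pose f j : R := if excluded_middle_informative (P j r) then 1 else 0.
exists (SS f); apply: Rcirc_of => i im Hs.
have H := SSP f im; have [ne _] := eeP im; have nc := Rcirc_not Hc im.
have [_ _ Pm] := Pprime im.
have [[Pir fi]|[Pir fi]] : (P i r /\ f i = 1) \/ (~ P i r /\ f i = 0).
  by rewrite /f; case: (excluded_middle_informative (P i r)); [left|right].
  all: rewrite fi in H.
  have Huc : P i (SS f * c).
    by have := idB (I := PI im) Hs Pir; rewrite addrC addKr.
  have : P i (ee i * c).
    have := idB (I := PI im) Huc (idMr (I := PI im) c H).
    by rewrite mul1r; congr (P i); ring.
  by case/Pm.
apply: Pir.
have : P i (r + SS f * c - SS f * c).
  apply: (idB (I := PI im)) => //.
  by apply: (idMr (I := PI im)); move: H; rewrite mul0r subr0.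
by rewrite addrK.
Qed.

Lemma avoidB (L : ideal R) : (forall i, (i < m)%N -> exists2 l, L l & ~ P i l) ->
  exists2 d, L d & Rcirc d.
Proof.
move=> H.
have H' : forall i, exists l, (i < m)%N -> L l /\ ~ P i l.
  move=> i; case: (ltnP i m) => im; last by exists 0.
  by have [l ? ?] := H i im; exists l.
pose l i := proj1_sig (constructive_indefinite_description _ (H' i)).
have lP i : (i < m)%N -> L (l i) /\ ~ P i (l i).
  exact: (proj2_sig (constructive_indefinite_description _ (H' i))).
exists (SS l).
  apply: idsum => j; apply: idMr; exact: (lP j (ltn_ord j)).1.
apply: Rcirc_of => i im Hd.
have [_ _ Pm] := Pprime im.
have : P i (l i * ee i).
  have := idB (I := PI im) Hd (SSP l im); by rewrite opprB addrC addrNK.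
by case/Pm; [apply: (lP i im).2 | apply: (eeP im).1].
Qed.

End Avoid.

Section Main.
Variable R : comNzRingType.
Variable p : nat.
Hypothesis hp : p \in [pchar R].
Variable w0 : nat.
Variable c : R.
Hypothesis hc : weak_test p w0 c.

Definition BB n (r : R) : Prop := if (w0 <= n)%N then exists s : R, r = s * c else r = 0.

Lemma partI (h : Hrep R) : Tsub p h <-> annH p BB h.
Proof.
split.
- move=> Th th Hth a m; rewrite /act.
  apply: (idsum (I := frobI p a m)) => i /=.
  case: ifP => im; last exact: (id0 (frobI p a m)).
  have := Hth i; rewrite /BB; case: ifP => wi; last first.
    by move=> ->; rewrite mul0r; exact: (id0 (frobI p a m)).
  move=> [s ->]; rewrite -mulrA; apply: (idMl (I := frobI p a m)).
  have := (hc.2 (frobI p a (m - i)) (h a (m - i)%N)).1 (Th a (m - i)%N) i wi.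
  by move=> X; have := (frob_frob hp a (m - i) i _).1 X; rewrite subnK.
- move=> Ah a n; apply: (hc.2 (frobI p a n) (h a n)).2 => k wk /=.
  apply/(frob_frob hp).
  have := Ah (homog c k) _ a (n + k)%N; rewrite act_homog leq_addl addnK; apply.
  move=> i; rewrite nth_homog /BB; case: eqP => [->|_].
    by rewrite wk; exists 1; rewrite mul1r.
  by case: ifP => // _; exists 0; rewrite mul0r.
Qed.

Definition Cn n (r : R) : Prop :=
  forall (a : ideal R) z, tight p a z -> frob p a n (r * z ^+ (p ^ n)).

Lemma Cn_ideal n : is_ideal (Cn n).
Proof.
split.
- by move=> a z _; rewrite mul0r; apply: (id0 (frobI p a n)).
- move=> x y Hx Hy a z t; rewrite mulrDl.
  by apply: (idD (I := frobI p a n)); [apply: Hx | apply: Hy].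
- by move=> r x Hx a z t; rewrite -mulrA; apply: (idMl (I := frobI p a n)); apply: Hx.
Qed.
Definition CnI n : ideal R := Ideal (Cn_ideal n).

Lemma Cn_S n : subI (Cn n) (Cn n.+1).
Proof.
move=> r Hr a z [c' Hc' [N HN]].
have t : tight p (frobI p a 1) (z ^+ p).
  exists c' => //; exists N => k kN /=; apply/(frob_frob hp).
  by rewrite -exprM -expnS add1n; apply: HN; apply: leqW.
have := Hr _ _ t => /= /frob_frob; rewrite add1n -exprM -expnS.
by apply.
Qed.

Lemma Cn_mono n k : (n <= k)%N -> subI (Cn n) (Cn k).
Proof.
move=> /subnK <-; elim: (k - n)%N => [//|j IH] x Hx.
by rewrite addSn; apply: Cn_S; apply: IH.
Qed.

Lemma wt_C w d : weak_test p w d -> Cn w d.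
Proof. by move=> [_ H] a z t; apply: (H a z).1. Qed.

Lemma Cn_grann n : eqI (grann p (Tsub (R:=R) p) n) (Cn n).
Proof.
move=> r; split.
- move=> Hg a z t.
  pose h : Hrep R := fun b k => if excluded_middle_informative (b = a)
     then (if k == 0%N then z else 0) else 0.
  have hH : inH p h.
    exists [:: (a, 0%N)] => b k /= nin; rewrite /h.
    destruct (excluded_middle_informative (b = a)) as [E|nE]; last exact: (id0 (frobI p b k)).
    case: eqP => [E0|_]; last exact: (id0 (frobI p b k)).
    by exfalso; apply: nin; left; rewrite E E0.
  have hT : Tsub p h.
    move=> b k; rewrite /h.
    destruct (excluded_middle_informative (b = a)) as [E|nE]; last exact: tight0.
    case: eqP => [E0|_]; last exact: tight0.
    subst b; rewrite E0 /=; apply: (tight_eqI (a := a)) => // x; split => Hx.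
      exact: ((frob_0 p a x).2 Hx).
    exact: ((frob_0 p a x).1 Hx).
  have := Hg h hH hT a n; rewrite act_homog leqnn subnn /h.
  by destruct (excluded_middle_informative (a = a)).
- move=> Hr h hH hT a k; rewrite act_homog.
  case: leqP => nk; last exact: (id0 (frobI p a k)).
  have := (frob_frob hp a (k - n) n _).1 (Hr (frobI p a (k - n)) (h a (k - n)%N) (hT a (k - n)%N)).
  by rewrite subnK.
Qed.

Lemma grann_ideal (T' : Hrep R -> Prop) n : is_ideal (grann p T' n).
Proof.
split.
- move=> h _ _ a k; rewrite act_homog mul0r if_same; exact: (id0 (frobI p a k)).
- move=> x y Hx Hy h hH hT a k; have := Hx h hH hT a k; have := Hy h hH hT a k.
  rewrite !act_homog; case: ifP => _ Y X; last exact: (id0 (frobI p a k)).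
  by rewrite mulrDl; apply: (idD (I := frobI p a k)).
- move=> r x Hx h hH hT a k; have := Hx h hH hT a k.
  rewrite !act_homog; case: ifP => _ X; last exact: (id0 (frobI p a k)).
  by rewrite -mulrA; apply: (idMl (I := frobI p a k)).
Qed.

Lemma mulc_ax : is_ideal (fun r : R => exists s, r = s * c).
Proof.
split.
- by exists 0; rewrite mul0r.
- by move=> x y [s ->] [t ->]; exists (s + t); rewrite mulrDl.
- by move=> r x [s ->]; exists (r * s); rewrite mulrA.
Qed.

Lemma annH_ext (B1 B2 : nat -> R -> Prop) h : (forall n r, B1 n r <-> B2 n r) ->
  annH p B1 h <-> annH p B2 h.
Proof.
by move=> E; split => H th Hth; apply: H => i; apply/E; apply: Hth.
Qed.

End Main.
Unset Implicit Arguments.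

Theorem theorem2p6 (R : comNzRingType) (p : nat) (hp : p \in [pchar R])
    (hN : noetherian R) (w0 : nat) (c : R) (hc : weak_test p w0 c) :
  (* (i) *)
  (eqH p (Tsub (R:=R) p) (annH p (fun n r => if (w0 <= n)%N then exists s : R, r = s * c else r = 0))
   /\ special p (Tsub (R:=R) p))
  /\
  (* (ii) *)
  (exists N0, forall n, (N0 <= n)%N -> eqI (grann p (Tsub (R:=R) p) n) (weak_test_ideal (R:=R) p))
  /\
  (* (iii) *)
  (forall T' : Hrep R -> Prop, special p T' ->
     forall L : R -> Prop,
       (exists N0, forall n, (N0 <= n)%N -> eqI (grann p T' n) L) ->
       height_ge 1 L ->
       subH p T' (Tsub (R:=R) p)).
Proof.
have [m [P [P1 P2 P3]]] := minprimes hN.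
split; [split|split].
- by move=> h _; apply: (partI hp hc).
- pose b n : ideal R := if (w0 <= n)%N then Ideal (mulc_ax c) else Ideal (zero_ax R).
  have Eb : forall n r, (b n : R -> Prop) r <-> BB w0 c n r.
    by move=> n r; rewrite /b /BB; case: ifP.
  exists b; split.
    move=> n r; rewrite /b; case: (leqP w0 n) => wn.
      by rewrite (leqW wn).
    by case: ifP => //= _ ->; exists 0; rewrite GRing.mul0r.
  move=> h _; rewrite (partI hp hc); apply: annH_ext => n r; exact: iff_sym (Eb n r).
- have [N HN] := hN (CnI R p) (Cn_S hp).
  have stab : forall (y : R) w, weak_test p w y -> forall n, (N <= n)%N -> Cn p n y.
    move=> y w Hy n Nn.
    have := Cn_mono hp (leq_maxr n w) (wt_C Hy).
    move=> /(HN _ (leq_trans Nn (leq_maxl n w))) /(HN n Nn) //.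
  exists N => n Nn r; rewrite Cn_grann //; split => Hr.
  + have [u Hu] := avoidA P1 P2 P3 r hc.1.
    have Cc : Cn p n c by apply: stab hc n Nn.
    have Cd : Cn p n (r + u * c).
      by apply: (idD (I := CnI R p n)) => //; apply: (idMl (I := CnI R p n)).
    have Td : weak_test_ideal p (r + u * c).
      apply: gen_sub; right; exists n; split => // b r'; split.
        move=> t k nk; apply: (Cn_mono hp nk Cd).
        exact: t.
      by move=> H; exists (r + u * c) => //; exists n.
    have Tc : weak_test_ideal p (u * c).
      by apply: (idMl (I := genI _)); apply: gen_sub; right; exists w0.
    have := idB (I := genI _) Td Tc.
    by rewrite GRing.addrK.
  + apply: (Hr (CnI R p n)) => y [->|[w Hw]].
      by move=> a z _; rewrite GRing.mul0r; apply: (id0 (frobI p a n)).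
    exact: stab Hw n Nn.
- move=> T' _ L [N0 HL] hh h hH hT a k.
  have [d Ld Rd] : exists2 d, Ideal (grann_ideal p T' N0) d & Rcirc d.
    apply: (avoidB P1 P2 P3) => i im.
    apply: NNPP => H.
    have sL : subI L (P i).
      move=> x Lx; apply: NNPP => nP; apply: H; exists x => //.
      by apply/(HL N0 (leqnn N0)).
    have [Q [EQ Qp Qch]] := hh (P i) (P1 i im).1 sL.
    have [s01 [x [Q0x nQ1x]]] := Qch 0%N isT.
    apply: nQ1x; apply: ((P1 i im).2 (Q 1%N) (Qp 1%N isT)).
      by move=> y Hy; apply/EQ; apply: s01.
    by apply/EQ.
  exists d => //; exists N0 => n Nn.
  have Gd : grann p T' n d by apply/(HL n Nn); apply/(HL N0 (leqnn N0)).
  have := Gd h hH hT a (k + n)%N.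
  rewrite act_homog leq_addl addnK => X.
  exact: ((frob_frob hp a k n _).2 X).
Qed.
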